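(* Let $n,d\ge1$, $p>d$, $\Delta\in\mathbb{R}^{nd\times nd}$ symmetric with $d\times d$ blocks, $\Delta_{ii}=0$, $Z^{\top}=[I_d,\dots,I_d]$, $A=ZZ^{\top}+\Delta$, $f(S)=\langle A,SS^{\top}\rangle$. Every first-order critical point $S$ of $f$ satisfies \[ \|SS^{\top}\|_F^2\ge\|Z^{\top}S\|_F^2-\frac1n\|\Delta S\|_F^2. \]
   Context: $S\in\mathbb{R}^{nd\times p}$ has $d\times p$ blocks $S_i$ with $S_iS_i^{\top}=I_d$; $A_{ij}=I_d+\Delta_{ij}$. $S$ is a first-order critical point if $\sum_jA_{ij}S_j=\Lambda_{ii}S_i$ for all $i$, where $\Lambda_{ii}=\frac12\sum_j(S_iS_j^{\top}A_{ji}+A_{ij}S_jS_i^{\top})$ (equivalently, the Riemannian gradient of $f$ on the product of Stiefel manifolds vanishes). *)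

(* Defs.v *)
From HB Require Import structures.
From mathcomp Require Import all_boot all_order all_algebra.
Set Implicit Arguments. Unset Strict Implicit. Unset Printing Implicit Defensive.
Import Order.TTheory GRing.Theory Num.Theory.
Local Open Scope ring_scope.

(* An nd x p matrix S is represented by its n blocks S i : 'M_(d,p);
   an nd x nd matrix Delta by its d x d blocks Delta i j. *)

Definition frob2 (R : ringType) (m k : nat) (M : 'M[R]_(m, k)) : R :=
  \sum_(a < m) \sum_(b < k) M a b ^+ 2.

(* block (i,j) of A = Z Z^T + Delta, i.e. I_d + Delta_ij *)
Definition Ablk (R : ringType) (n d : nat) (Delta : 'I_n -> 'I_n -> 'M[R]_d)
  (i j : 'I_n) : 'M[R]_d := 1%:M + Delta i j.

Definition Lambda (R : fieldType) (n d p : nat) (Delta : 'I_n -> 'I_n -> 'M[R]_d)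
  (S : 'I_n -> 'M[R]_(d, p)) (i : 'I_n) : 'M[R]_d :=
  2%:R^-1 *: \sum_(j < n) (S i *m (S j)^T *m Ablk Delta j i
                           + Ablk Delta i j *m S j *m (S i)^T).

Definition stiefel_prod (R : ringType) (n d p : nat) (S : 'I_n -> 'M[R]_(d, p)) :=
  forall i, S i *m (S i)^T = 1%:M.

(* first-order critical point of f(S) = <A, S S^T> *)
Definition first_order_critical (R : fieldType) (n d p : nat)
  (Delta : 'I_n -> 'I_n -> 'M[R]_d) (S : 'I_n -> 'M[R]_(d, p)) :=
  stiefel_prod S /\
  forall i, \sum_(j < n) Ablk Delta i j *m S j = Lambda Delta S i *m S i.

(* Main.v *)
Require Import Defs.
From HB Require Import structures.
From mathcomp Require Import all_boot all_order all_algebra.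

Import Order.TTheory GRing.Theory Num.Theory.
Local Open Scope ring_scope.

Section Aux.
Variable R : realFieldType.

Lemma frob2E m k (M : 'M[R]_(m, k)) : frob2 M = \tr (M *m M^T).
Proof.
rewrite /frob2 /mxtrace; apply: eq_bigr => a _; rewrite mxE.
by apply: eq_bigr => b _; rewrite mxE expr2.
Qed.

Lemma frob2_ge0 m k (M : 'M[R]_(m, k)) : 0 <= frob2 M.
Proof. by apply: sumr_ge0 => a _; apply: sumr_ge0 => b _; apply: sqr_ge0. Qed.

Lemma frob2N m k (M : 'M[R]_(m, k)) : frob2 (- M) = frob2 M.
Proof.
rewrite /frob2; apply: eq_bigr => a _; apply: eq_bigr => b _.
by rewrite mxE sqrrN.
Qed.

Lemma pyth m k (X : 'M[R]_(m, k)) (P : 'M[R]_k) :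
  P^T = P -> P *m P = P ->
  frob2 X = frob2 (X *m P) + frob2 (X *m (1%:M - P)).
Proof.
move=> sP iP.
have sQ : (1%:M - P)^T = 1%:M - P by rewrite linearB /= trmx1 sP.
have iQ : (1%:M - P) *m (1%:M - P) = 1%:M - P.
  by rewrite mulmxBl mulmxBr !mulmx1 mul1mx mulmxBr mulmx1 iP subrr subr0.
rewrite !frob2E !trmx_mul sP sQ !mulmxA -(mulmxA X P P) iP.
rewrite -(mulmxA X (1%:M - P)) iQ -mxtraceD -mulmxDl -mulmxDr.
by rewrite addrC subrK mulmx1.
Qed.

Lemma cs_sum n (x : 'I_n -> R) :
  (\sum_i x i) ^+ 2 <= n%:R * \sum_i x i ^+ 2.
Proof.
have H : 0 <= \sum_i \sum_j (x i - x j) ^+ 2.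
  by apply: sumr_ge0 => i _; apply: sumr_ge0 => j _; apply: sqr_ge0.
have E : \sum_i \sum_j (x i - x j) ^+ 2 =
   2%:R * (n%:R * \sum_i x i ^+ 2 - (\sum_i x i) ^+ 2).
  have E1 : \sum_i \sum_j (x i - x j) ^+ 2 =
     \sum_i \sum_j (x i ^+ 2 + x j ^+ 2) - 2%:R * \sum_i \sum_j (x i * x j).
    rewrite mulr_sumr -sumrB; apply: eq_bigr => i _.
    rewrite mulr_sumr -sumrB; apply: eq_bigr => j _.
    by rewrite sqrrB mulr_natl addrAC.
  have EA : \sum_i \sum_j (x i ^+ 2 + x j ^+ 2) = 2%:R * (n%:R * \sum_i x i ^+ 2).
    under eq_bigr do rewrite big_split /= sumr_const card_ord.
    rewrite big_split /= sumr_const card_ord -sumrMnl.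
    by rewrite -mulr2n (mulr_natl _ 2) mulr_natl sumrMnl.
  have EB : \sum_i \sum_j (x i * x j) = (\sum_i x i) ^+ 2.
    rewrite expr2 mulr_suml; apply: eq_bigr => i _.
    by rewrite mulr_sumr.
  by rewrite E1 EA EB mulrBr.
rewrite E in H; rewrite -subr_ge0.
by rewrite pmulr_rge0 ?ltr0n in H.
Qed.

Lemma cs_frob n m k (X : 'I_n -> 'M[R]_(m, k)) :
  frob2 (\sum_i X i) <= n%:R * \sum_i frob2 (X i).
Proof.
rewrite /frob2 [X in _ <= _ * X]exchange_big /= mulr_sumr.
apply: ler_sum => a _.
rewrite [X in _ <= _ * X]exchange_big /= mulr_sumr.
apply: ler_sum => b _.
rewrite summxE; exact: cs_sum.
Qed.

End Aux.

Theorem lemma7 (R : realFieldType) (n d p : nat)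
  (Delta : 'I_n -> 'I_n -> 'M[R]_d) (S : 'I_n -> 'M[R]_(d, p)) :
  (1 <= n)%N -> (1 <= d)%N -> (d < p)%N ->
  (forall i j, Delta j i = (Delta i j)^T) ->
  (forall i, Delta i i = 0) ->
  first_order_critical Delta S ->
  \sum_(i < n) \sum_(j < n) frob2 (S i *m (S j)^T)
    >= frob2 (\sum_(i < n) S i)
       - n%:R^-1 * \sum_(i < n) frob2 (\sum_(j < n) Delta i j *m S j).
Proof.
move=> n1 _ _ _ _ [St Cr].
set T := \sum_(i < n) S i.
set D := fun i => \sum_(j < n) Delta i j *m S j.
rewrite -/(D _).
have key : forall i, frob2 T <= frob2 (T *m (S i)^T) + frob2 (D i).
  move=> i.
  set P := (S i)^T *m S i.
  have sP : P^T = P by rewrite /P trmx_mul trmxK.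
  have iP : P *m P = P by rewrite /P mulmxA -(mulmxA _ (S i)) St mulmx1.
  have ES : \sum_(j < n) Ablk Delta i j *m S j = T + D i.
    rewrite /T /D -big_split; apply: eq_bigr => j _.
    by rewrite /Ablk mulmxDl mul1mx.
  have eT : T = Lambda Delta S i *m S i - D i by rewrite -Cr ES addrK.
  have e1 : T *m (1%:M - P) = - (D i *m (1%:M - P)).
    rewrite {1}eT mulmxBl -mulmxA mulmxBr mulmx1 /P mulmxA St mul1mx.
    by rewrite subrr mulmx0 sub0r.
  have e2 : frob2 (T *m P) = frob2 (T *m (S i)^T).
    by rewrite !frob2E !trmx_mul /P !mulmxA -(mulmxA _ (S i)) St mulmx1.
  rewrite (@pyth _ _ _ T _ sP iP) e1 frob2N e2 lerD2l.
  rewrite [X in _ <= X](@pyth _ _ _ (D i) _ sP iP) lerDr; exact: frob2_ge0.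
have sumkey : n%:R * frob2 T <=
    \sum_(i < n) frob2 (T *m (S i)^T) + \sum_(i < n) frob2 (D i).
  rewrite -big_split /=.
  have -> : n%:R * frob2 T = \sum_(i < n) frob2 T by rewrite sumr_const card_ord mulr_natl.
  by apply: ler_sum => i _; apply: key.
have csk : \sum_(i < n) frob2 (T *m (S i)^T) <=
    n%:R * \sum_(i < n) \sum_(j < n) frob2 (S i *m (S j)^T).
  rewrite [X in _ <= _ * X]exchange_big /= mulr_sumr; apply: ler_sum => j _.
  rewrite /T mulmx_suml; exact: cs_frob.
have n0 : 0 < n%:R :> R by rewrite ltr0n.
set L := \sum_(i < n) \sum_(j < n) _.
set E := \sum_(i < n) frob2 (D i).
have -> : frob2 T - n%:R^-1 * E = n%:R^-1 * (n%:R * frob2 T - E).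
  by rewrite mulrBr mulrA mulVf ?mul1r // gt_eqF.
rewrite -[L](mulKf (lt0r_neq0 n0)).
apply: ler_wpM2l; first by rewrite invr_ge0 ltW.
by rewrite lerBlDr; apply: le_trans sumkey _; rewrite lerD2r.
Qed.
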